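(* Let $L$ be a finite-dimensional Lie superalgebra with free presentation $0\to R\to F\to L\to 0$, and let $(T,\lambda)$ be a universal element of $C(L)$. Then $\mathrm{Ker}(\lambda)\cong (F'\cap R)/[F,R]$.
   Context: Lie superalgebras over a field of characteristic $\neq 2,3$; homomorphisms are even. A free presentation of $L$ is a free Lie superalgebra $F$ on a $\mathbb{Z}_2$-graded set with a surjective homomorphism $F\to L$ whose kernel is $R$; $F'=[F,F]$. $C(L)$ is the class of pairs $(K,\lambda)$ with $\lambda:K\to L$ a surjective homomorphism and $\mathrm{Ker}(\lambda)\subseteq[K,K]\cap Z(K)$, $Z(K)$ the center. $(T,\sigma)\in C(L)$ is universal if for every $(K,\lambda)\in C(L)$ there is a homomorphism $\tau:T\to K$ with $\lambda\circ\tau=\sigma$. *)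

(* Defs.v *)
From HB Require Import structures.
From mathcomp Require Import all_boot all_order all_algebra.
Set Implicit Arguments. Unset Strict Implicit. Unset Printing Implicit Defensive.
Import GRing.Theory.
Local Open Scope ring_scope.

Definition ssign (K : fieldType) (b : bool) : K := if b then -1 else 1.

Record lieSuper (K : fieldType) := LieSuper {
  lsT :> lmodType K;
  lsdeg : bool -> lsT -> Prop;
  lsbr : lsT -> lsT -> lsT;
  lsdeg0 : forall b, lsdeg b 0;
  lsdegD : forall b x y, lsdeg b x -> lsdeg b y -> lsdeg b (x + y);
  lsdegZ : forall b (a : K) x, lsdeg b x -> lsdeg b (a *: x);
  lsdeg_sum : forall x, exists x0 x1,
      lsdeg false x0 /\ lsdeg true x1 /\ x = x0 + x1;
  lsdeg_direct : forall x, lsdeg false x -> lsdeg true x -> x = 0;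
  lsbr_linl : forall (a : K) x y z, lsbr (a *: x + y) z = a *: lsbr x z + lsbr y z;
  lsbr_linr : forall (a : K) x y z, lsbr z (a *: x + y) = a *: lsbr z x + lsbr z y;
  lsbr_deg : forall i j x y, lsdeg i x -> lsdeg j y -> lsdeg (i (+) j) (lsbr x y);
  lsbr_anti : forall i j x y, lsdeg i x -> lsdeg j y ->
      lsbr x y = - (ssign K (i && j) *: lsbr y x);
  lsbr_jacobi : forall i j k x y z, lsdeg i x -> lsdeg j y -> lsdeg k z ->
      ssign K (i && k) *: lsbr x (lsbr y z)
    + ssign K (j && i) *: lsbr y (lsbr z x)
    + ssign K (k && j) *: lsbr z (lsbr x y) = 0
}.

Arguments lsdeg {K} _ _ _.
Arguments lsbr {K} _ _ _.

Section LieDefs.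
Variable K : fieldType.

Definition ls_findim (L : lieSuper K) : Prop :=
  exists (n : nat) (v : 'I_n -> L), forall x : L,
    exists c : 'I_n -> K, x = \sum_(i < n) c i *: v i.

Definition ls_hom (L M : lieSuper K) (f : L -> M) : Prop :=
  [/\ forall (a : K) (x y : L), f (a *: x + y) = a *: f x + f y,
      forall b x, lsdeg L b x -> lsdeg M b (f x)
    & forall x y, f (lsbr L x y) = lsbr M (f x) (f y)].

Definition ls_span (L : lieSuper K) (P : L -> Prop) : L -> Prop :=
  fun x => exists (n : nat) (c : 'I_n -> K) (v : 'I_n -> L),
    (forall i, P (v i)) /\ x = \sum_(i < n) c i *: v i.

Definition ls_brk (L : lieSuper K) (A B : L -> Prop) : L -> Prop :=
  ls_span (fun z => exists a b, A a /\ B b /\ z = lsbr L a b).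

Definition ls_all (L : lieSuper K) : L -> Prop := fun _ => True.

Definition ls_derived (L : lieSuper K) : L -> Prop := ls_brk (@ls_all L) (@ls_all L).

Definition ls_center (L : lieSuper K) : L -> Prop :=
  fun z => forall x, lsbr L z x = 0.

Definition ls_ker (L M : lieSuper K) (f : L -> M) : L -> Prop :=
  fun x => f x = 0.

Definition ls_free (F : lieSuper K) (X : Type) (deg : X -> bool) (iota : X -> F)
  : Prop :=
  (forall x, lsdeg F (deg x) (iota x)) /\
  forall (M : lieSuper K) (f : X -> M), (forall x, lsdeg M (deg x) (f x)) ->
    exists g : F -> M, [/\ ls_hom g, (forall x, g (iota x) = f x) &
      forall g' : F -> M, ls_hom g' -> (forall x, g' (iota x) = f x) ->
        forall y, g' y = g y].

Definition in_C (L T : lieSuper K) (lam : T -> L) : Prop :=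
  [/\ ls_hom lam, (forall y : L, exists x, lam x = y)
    & forall z, ls_ker lam z -> ls_derived z /\ ls_center z].

Definition C_universal (L T : lieSuper K) (sig : T -> L) : Prop :=
  in_C sig /\
  forall (M : lieSuper K) (lam : M -> L), in_C lam ->
    exists tau : T -> M, ls_hom tau /\ forall x, lam (tau x) = sig x.

(* The sub-superalgebra A of T is isomorphic (as a Lie superalgebra,
   via an even isomorphism) to the quotient J / I of subspaces I <= J of F:
   expressed by an even, linear, bracket-preserving map phi defined on J,
   mapping J onto A, whose kernel on J is exactly I (so that phi induces
   the isomorphism J/I ~= A). *)
Definition subquot_iso (T F : lieSuper K) (A : T -> Prop) (J I : F -> Prop)
  : Prop :=
  (forall x, I x -> J x) /\
  exists phi : F -> T,
  [/\ forall (a : K) x y, J x -> J y -> phi (a *: x + y) = a *: phi x + phi y,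
      forall b x, J x -> lsdeg F b x -> lsdeg T b (phi x),
      forall x y, J x -> J y -> phi (lsbr F x y) = lsbr T (phi x) (phi y),
      forall x, J x -> A (phi x)
    & forall z, A z -> exists x, J x /\ phi x = z]
  /\ (forall x, J x -> (phi x = 0 <-> I x)).

End LieDefs.

(* Main.v *)
Require Import Defs.
From HB Require Import structures.
From mathcomp Require Import all_boot all_order all_algebra.
From mathcomp Require Import boolp classical_sets.
Set Implicit Arguments. Unset Strict Implicit. Unset Printing Implicit Defensive.
Import GRing.Theory.
Local Open Scope ring_scope.

Section Lin.
Variables (K : fieldType) (U V : lmodType K) (f : U -> V).
Hypothesis hf : forall (a : K) x y, f (a *: x + y) = a *: f x + f y.
Lemma lin0 : f 0 = 0.
Proof. by apply: (addrI (f 0)); rewrite addr0 -{1}(scale1r (f 0)) -hf scale1r addr0. Qed.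
Lemma linD x y : f (x + y) = f x + f y.
Proof. by rewrite -{1}(scale1r x) hf scale1r. Qed.
Lemma linZ a x : f (a *: x) = a *: f x.
Proof. by rewrite -(addr0 (a *: x)) hf lin0 addr0. Qed.
Lemma linN x : f (- x) = - f x.
Proof. by rewrite -scaleN1r linZ scaleN1r. Qed.
Lemma linB x y : f (x - y) = f x - f y.
Proof. by rewrite linD linN. Qed.
Lemma linS n (c : 'I_n -> K) (v : 'I_n -> U) :
  f (\sum_(i < n) c i *: v i) = \sum_(i < n) c i *: f (v i).
Proof.
elim: n c v => [|n IH] c v; first by rewrite !big_ord0 lin0.
by rewrite !big_ord_recr /= linD linZ IH.
Qed.
End Lin.

Section Br.
Variables (K : fieldType) (A : lieSuper K).
Implicit Types x y z : A.
Lemma brlinl z : forall (a : K) x y, lsbr A (a *: x + y) z = a *: lsbr A x z + lsbr A y z.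
Proof. by move=> a x y; apply: lsbr_linl. Qed.
Lemma brlinr z : forall (a : K) x y, lsbr A z (a *: x + y) = a *: lsbr A z x + lsbr A z y.
Proof. by move=> a x y; apply: lsbr_linr. Qed.
Lemma br0l z : lsbr A 0 z = 0. Proof. exact: (lin0 (brlinl z)). Qed.
Lemma br0r z : lsbr A z 0 = 0. Proof. exact: (lin0 (brlinr z)). Qed.
Lemma brDl x y z : lsbr A (x + y) z = lsbr A x z + lsbr A y z. Proof. exact: (linD (brlinl z)). Qed.
Lemma brDr x y z : lsbr A z (x + y) = lsbr A z x + lsbr A z y. Proof. exact: (linD (brlinr z)). Qed.
Lemma brZl a x z : lsbr A (a *: x) z = a *: lsbr A x z. Proof. exact: (linZ (brlinl z)). Qed.
Lemma brZr a x z : lsbr A z (a *: x) = a *: lsbr A z x. Proof. exact: (linZ (brlinr z)). Qed.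
Lemma brNl x z : lsbr A (- x) z = - lsbr A x z. Proof. exact: (linN (brlinl z)). Qed.
Lemma brNr x z : lsbr A z (- x) = - lsbr A z x. Proof. exact: (linN (brlinr z)). Qed.
Lemma brBl x y z : lsbr A (x - y) z = lsbr A x z - lsbr A y z. Proof. exact: (linB (brlinl z)). Qed.
Lemma brBr x y z : lsbr A z (x - y) = lsbr A z x - lsbr A z y. Proof. exact: (linB (brlinr z)). Qed.

Lemma degN b x : lsdeg A b x -> lsdeg A b (- x).
Proof. by move=> h; rewrite -scaleN1r; apply: lsdegZ. Qed.
Lemma degB b x y : lsdeg A b x -> lsdeg A b y -> lsdeg A b (x - y).
Proof. by move=> h1 h2; apply: lsdegD => //; apply: degN. Qed.

Definition pr0 (x : A) : A := proj1_sig (cid (lsdeg_sum x)).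
Lemma pr0P x : lsdeg A false (pr0 x) /\ lsdeg A true (x - pr0 x).
Proof.
rewrite /pr0; case: (cid (lsdeg_sum x)) => x0 [x1 [h0 [h1 e]]] /=.
by split => //; rewrite e [x0 + _]addrC addrK.
Qed.
Definition pr (b : bool) x := if b then x - pr0 x else pr0 x.
Lemma pr_deg b x : lsdeg A b (pr b x).
Proof. by case: b; case: (pr0P x). Qed.
Lemma pr_sum x : x = pr false x + pr true x.
Proof. by rewrite /= addrC subrK. Qed.
Lemma pr_uniq u v : lsdeg A false u -> lsdeg A true v ->
  pr false (u + v) = u /\ pr true (u + v) = v.
Proof.
move=> hu hv.
have e : u - pr false (u + v) = pr true (u + v) - v.
  by rewrite /= addrAC addrK.
have h0 : u - pr false (u + v) = 0.
  apply: lsdeg_direct; first by apply: degB => //; apply: pr_deg.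
  by rewrite e; apply: degB => //; apply: pr_deg.
have e0 : pr false (u + v) = u by apply/eqP; rewrite eq_sym -subr_eq0 h0.
split => //; rewrite /= in e0 *; by rewrite e0 addrAC subrr add0r.
Qed.
Lemma pr_homog b x : lsdeg A b x -> pr b x = x /\ pr (~~ b) x = 0.
Proof.
case: b => h; [have := pr_uniq (lsdeg0 A false) h | have := pr_uniq h (lsdeg0 A true)];
  rewrite ?add0r ?addr0 => -[e1 e2]; by split.
Qed.
Lemma pr_lin b : forall (a : K) x y, pr b (a *: x + y) = a *: pr b x + pr b y.
Proof.
move=> a x y.
have E : a *: x + y = (a *: pr false x + pr false y) + (a *: pr true x + pr true y).
  by rewrite {1}(pr_sum x) {1}(pr_sum y) scalerDr addrACA.
have := pr_uniq (lsdegD (lsdegZ a (pr_deg false x)) (pr_deg false y))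
                (lsdegD (lsdegZ a (pr_deg true x)) (pr_deg true y)).
rewrite -E => -[e1 e2]; case: b; [exact: e2 | exact: e1].
Qed.
End Br.

Section Span.
Variables (K : fieldType) (A : lieSuper K).
Implicit Types P Q : A -> Prop.

Lemma span_ind P Q : Q 0 -> (forall a x y, Q x -> Q y -> Q (a *: x + y)) ->
  (forall v, P v -> Q v) -> forall x, ls_span P x -> Q x.
Proof.
move=> Q0 QL QP x [n [c [v [hv ->]]]].
elim: n c v hv => [|n IH] c v hv; first by rewrite big_ord0.
rewrite big_ord_recr /= addrC; apply: QL; first exact: QP.
by apply: IH => i; apply: hv.
Qed.

Lemma span_sub P v : P v -> ls_span P v.
Proof.
move=> h; exists 1%N, (fun _ => 1), (fun _ => v); split => //.
by rewrite big_ord1 scale1r.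
Qed.

Lemma span0 P : ls_span P 0.
Proof. by exists 0%N, (fun _ => 0), (fun _ => 0); split; [by case | by rewrite big_ord0]. Qed.

Lemma span_lin P a x y : ls_span P x -> ls_span P y -> ls_span P (a *: x + y).
Proof.
move=> [n [c [v [hv ->]]]] [m [d [w [hw ->]]]].
exists (n + m)%N.
exists (fun i => match split i with inl j => a * c j | inr k => d k end).
exists (fun i => match split i with inl j => v j | inr k => w k end).
split.
  by move=> i; case: (split i).
rewrite big_split_ord /= scaler_sumr.
congr (_ + _); apply: eq_bigr => i _.
  by rewrite (unsplitK (inl i)) scalerA.
by rewrite (unsplitK (inr i)).
Qed.

Lemma spanD P x y : ls_span P x -> ls_span P y -> ls_span P (x + y).
Proof. by move=> h1 h2; rewrite -(scale1r x); apply: span_lin. Qed.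
Lemma spanZ P a x : ls_span P x -> ls_span P (a *: x).
Proof. by move=> h; rewrite -(addr0 (a *: x)); apply: span_lin => //; apply: span0. Qed.
Lemma spanN P x : ls_span P x -> ls_span P (- x).
Proof. by move=> h; rewrite -scaleN1r; apply: spanZ. Qed.
Lemma spanB P x y : ls_span P x -> ls_span P y -> ls_span P (x - y).
Proof. by move=> h1 h2; apply: spanD => //; apply: spanN. Qed.

Lemma span_mono P Q : (forall v, P v -> Q v) -> forall x, ls_span P x -> ls_span Q x.
Proof.
move=> h; apply: span_ind; first exact: span0.
  by move=> *; apply: span_lin.
by move=> v /h; apply: span_sub.
Qed.

Lemma span_span P x : ls_span (ls_span P) x -> ls_span P x.
Proof.
apply: span_ind => //; first exact: span0.
by move=> *; apply: span_lin.
Qed.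
End Span.

Section Graded.
Variables (K : fieldType) (A : lieSuper K).
Implicit Types x y z : A.

Lemma br4 x0 x1 y0 y1 : lsbr A (x0 + x1) (y0 + y1) =
  lsbr A x0 y0 + lsbr A x0 y1 + lsbr A x1 y0 + lsbr A x1 y1.
Proof. by rewrite !brDl !brDr !addrA. Qed.

Lemma br_expand x y : lsbr A x y =
  lsbr A (pr false x) (pr false y) + lsbr A (pr false x) (pr true y) +
  lsbr A (pr true x) (pr false y) + lsbr A (pr true x) (pr true y).
Proof.
by rewrite {1}(pr_sum x) {1}(pr_sum y) br4.
Qed.

Lemma pr_br b x y : pr b (lsbr A x y) =
  lsbr A (pr false x) (pr b y) + lsbr A (pr true x) (pr (~~ b) y).
Proof.
have hE : lsdeg A false (lsbr A (pr false x) (pr false y) + lsbr A (pr true x) (pr true y)).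
  apply: lsdegD.
    exact: (lsbr_deg (pr_deg false x) (pr_deg false y)).
  exact: (lsbr_deg (pr_deg true x) (pr_deg true y)).
have hO : lsdeg A true (lsbr A (pr false x) (pr true y) + lsbr A (pr true x) (pr false y)).
  apply: lsdegD.
    exact: (lsbr_deg (pr_deg false x) (pr_deg true y)).
  exact: (lsbr_deg (pr_deg true x) (pr_deg false y)).
have := pr_uniq hE hO.
have -> : (lsbr A (pr false x) (pr false y) + lsbr A (pr true x) (pr true y)) +
          (lsbr A (pr false x) (pr true y) + lsbr A (pr true x) (pr false y)) = lsbr A x y.
  by rewrite (br_expand x y) -!addrA; congr (_ + _); rewrite addrC -addrA.
by move=> [e1 e2]; case: b.
Qed.

Lemma brk_gen (P Q : A -> Prop) a b : Q a -> P b -> ls_brk Q P (lsbr A a b).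
Proof. by move=> hq hp; apply: span_sub; exists a, b. Qed.

Lemma brk_swap (P Q : A -> Prop) x y : (forall b, P (pr b x)) -> (forall b, Q (pr b y)) ->
  ls_brk Q P (lsbr A x y).
Proof.
move=> hP hQ.
have T a c : ls_brk Q P (lsbr A (pr a x) (pr c y)).
  rewrite (lsbr_anti (pr_deg a x) (pr_deg c y)).
  by apply: spanN; apply: spanZ; apply: brk_gen.
by rewrite br_expand; repeat apply: spanD; apply: T.
Qed.

Lemma brk_ok (P Q : A -> Prop) x y : (forall b, Q (pr b x)) -> (forall b, P (pr b y)) ->
  ls_brk Q P (lsbr A x y).
Proof.
move=> hQ hP.
by rewrite br_expand; repeat apply: spanD; apply: brk_gen.
Qed.
End Graded.

Lemma hom_lin (K : fieldType) (L M : lieSuper K) (f : L -> M) : ls_hom f ->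
  forall (a : K) x y, f (a *: x + y) = a *: f x + f y.
Proof. by case. Qed.

Lemma hom_pr (K : fieldType) (L M : lieSuper K) (f : L -> M) b x : ls_hom f ->
  f (pr b x) = pr b (f x).
Proof.
move=> hf; have [hl hd hb] := hf.
have := pr_uniq (hd _ _ (pr_deg false x)) (hd _ _ (pr_deg true x)).
rewrite -(linD hl) -pr_sum => -[e1 e2]; by case: b.
Qed.

Section Quot.
Variables (K : fieldType) (F : lieSuper K) (G : F -> Prop).
Local Notation S := (ls_span G).

Definition coset (y : F) : F -> Prop := fun z => S (z - y).
Definition qT := {C : F -> Prop | exists y, C = coset y}.
HB.instance Definition _ := gen_eqMixin qT.
HB.instance Definition _ := gen_choiceMixin qT.

Definition mk (y : F) : qT := exist _ (coset y) (ex_intro _ y erefl).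
Definition rep (q : qT) : F := proj1_sig (cid (proj2_sig q)).
Lemma repK q : mk (rep q) = q.
Proof.
case: q => C hC; rewrite /rep /=; case: (cid hC) => y e /=.
by apply: eq_exist.
Qed.
Lemma mk_surj q : exists y, q = mk y.
Proof. by exists (rep q); rewrite repK. Qed.

Lemma mk_eq y z : mk y = mk z <-> S (y - z).
Proof.
split.
  move=> e; have e' : coset y = coset z := congr1 (@proj1_sig _ _) e.
  have : coset y z by rewrite e' /coset subrr; apply: span0.
  by rewrite /coset => h; rewrite -opprB; apply: spanN.
move=> h; apply: eq_exist; apply: funext => w; apply: propext; rewrite /coset; split => h'.
  have -> : w - z = (w - y) + (y - z) by rewrite addrA subrK.
  exact: spanD.
have -> : w - y = (w - z) - (y - z) by rewrite opprB addrA subrK.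
exact: spanB.
Qed.

Lemma rep_mk y : S (rep (mk y) - y).
Proof. by apply/mk_eq; rewrite repK. Qed.

Definition qzero : qT := mk 0.
Definition qadd q1 q2 := mk (rep q1 + rep q2).
Definition qopp q := mk (- rep q).
Definition qscale (a : K) q := mk (a *: rep q).

Lemma qaddE y z : qadd (mk y) (mk z) = mk (y + z).
Proof.
apply/mk_eq; have -> : rep (mk y) + rep (mk z) - (y + z) = (rep (mk y) - y) + (rep (mk z) - z).
  by rewrite opprD addrACA.
by apply: spanD; apply: rep_mk.
Qed.
Lemma qoppE y : qopp (mk y) = mk (- y).
Proof. by apply/mk_eq; rewrite -opprD; apply: spanN; apply: rep_mk. Qed.
Lemma qscaleE a y : qscale a (mk y) = mk (a *: y).
Proof. by apply/mk_eq; rewrite -scalerBr; apply: spanZ; apply: rep_mk. Qed.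

Lemma qaddA : associative qadd.
Proof.
move=> q1 q2 q3; have [y1 ->] := mk_surj q1; have [y2 ->] := mk_surj q2; have [y3 ->] := mk_surj q3.
by rewrite !qaddE addrA.
Qed.
Lemma qaddC : commutative qadd.
Proof.
move=> q1 q2; have [y1 ->] := mk_surj q1; have [y2 ->] := mk_surj q2.
by rewrite !qaddE addrC.
Qed.
Lemma qadd0 : left_id qzero qadd.
Proof. by move=> q; have [y ->] := mk_surj q; rewrite qaddE add0r. Qed.
Lemma qaddN : left_inverse qzero qopp qadd.
Proof. by move=> q; have [y ->] := mk_surj q; rewrite qoppE qaddE addNr. Qed.

HB.instance Definition _ := GRing.isZmodule.Build qT qaddA qaddC qadd0 qaddN.

Lemma qscaleA a b q : qscale a (qscale b q) = qscale (a * b) q.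
Proof. by have [y ->] := mk_surj q; rewrite !qscaleE scalerA. Qed.
Lemma qscale1 : left_id 1 qscale.
Proof. by move=> q; have [y ->] := mk_surj q; rewrite qscaleE scale1r. Qed.
Lemma qscaleDr : right_distributive qscale qadd.
Proof.
move=> a q1 q2; have [y1 ->] := mk_surj q1; have [y2 ->] := mk_surj q2.
by rewrite [qadd (mk y1) _]qaddE [qscale a (mk y1)]qscaleE [qscale a (mk y2)]qscaleE qaddE qscaleE scalerDr.
Qed.
Lemma qscaleDl q : {morph qscale^~ q : a b / a + b >-> qadd a b}.
Proof. by move=> a b; have [y ->] := mk_surj q; rewrite !qscaleE qaddE scalerDl. Qed.

HB.instance Definition _ := GRing.Zmodule_isLmodule.Build K qT qscaleA qscale1 qscaleDr qscaleDl.

Lemma mk_lin : forall (a : K) (x y : F), mk (a *: x + y) = a *: mk x + mk y.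
Proof. by move=> a x y; rewrite -[a *: mk x]/(qscale a (mk x)) qscaleE -[_ + mk y]/(qadd _ (mk y)) qaddE. Qed.

Lemma mk_eq0 y : mk y = 0 <-> S y.
Proof. by rewrite -[0]/(mk 0) mk_eq subr0. Qed.

End Quot.

Section QuotLie.
Variables (K : fieldType) (F : lieSuper K) (G : F -> Prop).
Local Notation S := (ls_span G).
Hypothesis hGr : forall b z, S z -> S (pr b z).
Hypothesis hIl : forall x z, S z -> S (lsbr F x z).
Hypothesis hIr : forall x z, S z -> S (lsbr F z x).
Local Notation mk := (@mk K F G).
Local Notation qT := (qT G).

Lemma mkD y z : mk (y + z) = mk y + mk z. Proof. exact: (linD (@mk_lin K F G)). Qed.
Lemma mkZ a y : mk (a *: y) = a *: mk y. Proof. exact: (linZ (@mk_lin K F G)). Qed.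
Lemma mkN y : mk (- y) = - mk y. Proof. exact: (linN (@mk_lin K F G)). Qed.
Lemma mk0 : mk 0 = 0. Proof. by []. Qed.

Definition qdeg b (q : qT) := exists y, lsdeg F b y /\ q = mk y.
Definition qbr (q1 q2 : qT) : qT := mk (lsbr F (rep q1) (rep q2)).

Lemma qbrE y z : qbr (mk y) (mk z) = mk (lsbr F y z).
Proof.
apply/mk_eq.
have -> : lsbr F (rep (mk y)) (rep (mk z)) - lsbr F y z =
  lsbr F (rep (mk y) - y) (rep (mk z)) + lsbr F y (rep (mk z) - z).
  by rewrite brBl brBr addrA subrK.
by apply: spanD; [apply: hIr | apply: hIl]; apply: rep_mk.
Qed.

Lemma qdeg0 b : qdeg b 0.
Proof. by exists 0; split; [apply: lsdeg0|]. Qed.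
Lemma qdegD b x y : qdeg b x -> qdeg b y -> qdeg b (x + y).
Proof. by move=> [u [hu ->]] [v [hv ->]]; exists (u + v); rewrite mkD; split => //; apply: lsdegD. Qed.
Lemma qdegZ b (a : K) x : qdeg b x -> qdeg b (a *: x).
Proof. by move=> [u [hu ->]]; exists (a *: u); rewrite mkZ; split => //; apply: lsdegZ. Qed.
Lemma qdeg_sum x : exists x0 x1, qdeg false x0 /\ qdeg true x1 /\ x = x0 + x1.
Proof.
have [y ->] := mk_surj x; exists (mk (pr false y)), (mk (pr true y)).
split; first by exists (pr false y); split => //; apply: pr_deg.
split; first by exists (pr true y); split => //; apply: pr_deg.
by rewrite -mkD -pr_sum.
Qed.
Lemma qdeg_direct x : qdeg false x -> qdeg true x -> x = 0.
Proof.
move=> [u [hu ->]] [v [hv e]]; move: (e) => /mk_eq h.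
have := hGr false h; rewrite (linB (@pr_lin K F false)).
have [-> _] := pr_homog hu; have [_ ->] := pr_homog hv.
by rewrite subr0 => /mk_eq0.
Qed.
Lemma qbr_linl (a : K) x y z : qbr (a *: x + y) z = a *: qbr x z + qbr y z.
Proof.
have [u ->] := mk_surj x; have [v ->] := mk_surj y; have [w ->] := mk_surj z.
by rewrite -mk_lin !qbrE lsbr_linl mk_lin.
Qed.
Lemma qbr_linr (a : K) x y z : qbr z (a *: x + y) = a *: qbr z x + qbr z y.
Proof.
have [u ->] := mk_surj x; have [v ->] := mk_surj y; have [w ->] := mk_surj z.
by rewrite -mk_lin !qbrE lsbr_linr mk_lin.
Qed.
Lemma qbr_deg i j x y : qdeg i x -> qdeg j y -> qdeg (i (+) j) (qbr x y).
Proof.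
move=> [u [hu ->]] [v [hv ->]]; exists (lsbr F u v); rewrite qbrE; split => //.
exact: lsbr_deg.
Qed.
Lemma qbr_anti i j x y : qdeg i x -> qdeg j y -> qbr x y = - (ssign K (i && j) *: qbr y x).
Proof.
move=> [u [hu ->]] [v [hv ->]]; rewrite !qbrE (lsbr_anti hu hv).
by rewrite mkN mkZ.
Qed.
Lemma qbr_jacobi i j k x y z : qdeg i x -> qdeg j y -> qdeg k z ->
      ssign K (i && k) *: qbr x (qbr y z)
    + ssign K (j && i) *: qbr y (qbr z x)
    + ssign K (k && j) *: qbr z (qbr x y) = 0.
Proof.
move=> [u [hu ->]] [v [hv ->]] [w [hw ->]]; rewrite !qbrE.
by have := congr1 mk (lsbr_jacobi hu hv hw); rewrite !mkD !mkZ.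
Qed.

Definition qL : lieSuper K := @LieSuper K qT qdeg qbr qdeg0 qdegD qdegZ qdeg_sum qdeg_direct
  qbr_linl qbr_linr qbr_deg qbr_anti qbr_jacobi.

Lemma qL_mk_hom : ls_hom (fun y : F => (mk y : qL)).
Proof.
split.
- exact: mk_lin.
- by move=> b x hx; exists x.
- by move=> x y; rewrite /= qbrE.
Qed.
End QuotLie.

Section HomFacts.
Variables (K : fieldType).

Lemma hom_comp (A B C : lieSuper K) (f : A -> B) (g : B -> C) :
  ls_hom f -> ls_hom g -> ls_hom (fun x => g (f x)).
Proof.
move=> [f1 f2 f3] [g1 g2 g3]; split.
- by move=> a x y; rewrite f1 g1.
- by move=> b x hx; apply: g2; apply: f2.
- by move=> x y; rewrite f3 g3.
Qed.

Lemma hom_derived (A B : lieSuper K) (f : A -> B) y :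
  ls_hom f -> ls_derived y -> ls_derived (f y).
Proof.
move=> hf; have [f1 _ f3] := hf; move=> [n [c [v [hv ->]]]].
rewrite (linS f1); exists n, c, (fun i => f (v i)); split => // i.
by have [a [b [_ [_ ->]]]] := hv i; exists (f a), (f b); rewrite f3.
Qed.

Lemma ker_graded (A B : lieSuper K) (f : A -> B) z b :
  ls_hom f -> f z = 0 -> f (pr b z) = 0.
Proof.
move=> hf e; rewrite (hom_pr _ _ hf) e.
exact: (lin0 (@pr_lin K B b)).
Qed.

Lemma right_central (A : lieSuper K) (k w : A) :
  (forall b w', lsbr A (pr b k) w' = 0) -> lsbr A w k = 0.
Proof.
move=> h; rewrite br_expand.
rewrite !(lsbr_anti (pr_deg _ w) (pr_deg _ k)) !h !scaler0 !oppr0 !addr0.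
by [].
Qed.
End HomFacts.

Section Main.
Variables (K : fieldType) (L : lieSuper K) (X : Type) (deg : X -> bool) (F : lieSuper K)
  (iota : X -> F) (pi : F -> L) (T : lieSuper K) (lam : T -> L).
Hypothesis hF : ls_free deg iota.
Hypothesis hpi : ls_hom pi.
Hypothesis hpis : forall y : L, exists x, pi x = y.
Hypothesis hT : C_universal lam.

Local Notation R := (ls_ker pi).
Definition Gen (z : F) := exists a b, ls_all a /\ R b /\ z = lsbr F a b.
Local Notation I := (ls_span Gen).

Lemma pil : forall (a : K) x y, pi (a *: x + y) = a *: pi x + pi y.
Proof. by case: hpi. Qed.

Lemma R0 : R 0. Proof. exact: (lin0 pil). Qed.
Lemma Rlin a x y : R x -> R y -> R (a *: x + y).
Proof. by rewrite /ls_ker pil => -> ->; rewrite scaler0 addr0. Qed.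
Lemma Rpr b r : R r -> R (pr b r).
Proof. exact: ker_graded. Qed.
Lemma Rbrl w r : R r -> R (lsbr F w r).
Proof. by case: hpi => _ _ hb; rewrite /ls_ker hb => ->; apply: br0r. Qed.
Lemma Rbrr w r : R r -> R (lsbr F r w).
Proof. by case: hpi => _ _ hb; rewrite /ls_ker hb => ->; apply: br0l. Qed.
Lemma IR v : I v -> R v.
Proof.
apply: span_ind; [exact: R0 | by move=> *; apply: Rlin |].
by move=> z [a [b [_ [hb ->]]]]; apply: Rbrl.
Qed.
Lemma I_gen w r : R r -> I (lsbr F w r).
Proof. by move=> hr; apply: span_sub; exists w, r. Qed.
Lemma I_genr w r : R r -> I (lsbr F r w).
Proof.
move=> hr; have := @brk_swap K F R (@ls_all K F) r w (fun b => Rpr b hr) (fun _ => Logic.I).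
exact.
Qed.

Lemma lam_hom : ls_hom lam. Proof. by case: hT => -[]. Qed.
Lemma lam_surj y : exists t, lam t = y. Proof. by case: hT => -[]. Qed.
Lemma lam_ker z : lam z = 0 -> ls_derived z /\ ls_center z.
Proof. by case: hT => -[] _ _ h _; apply: h. Qed.
Lemma lam_central_l k w : lam k = 0 -> lsbr T k w = 0.
Proof. by move=> /lam_ker [_ h]; apply: h. Qed.
Lemma lam_central_r k w : lam k = 0 -> lsbr T w k = 0.
Proof.
move=> hk; apply: right_central => b w'; apply: lam_central_l.
exact: (ker_graded _ lam_hom).
Qed.

Lemma lift_deg b y : lsdeg L b y -> exists t, lsdeg T b t /\ lam t = y.
Proof.
move=> hy; have [t0 e] := lam_surj y; exists (pr b t0); split; first exact: pr_deg.
by rewrite (hom_pr _ _ lam_hom) e; have [-> _] := pr_homog hy.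
Qed.

Lemma exists_g : exists g : F -> T, ls_hom g /\ forall y, lam (g y) = pi y.
Proof.
have [hdeg hu] := hF.
have hd x : lsdeg L (deg x) (pi (iota x)) by case: hpi => _ h _; apply: h.
pose f x := proj1_sig (cid (lift_deg (hd x))).
have hf x : lsdeg T (deg x) (f x) /\ lam (f x) = pi (iota x).
  by rewrite /f; case: (cid _) => t [h1 h2].
have [g [hg hgi _]] := hu T f (fun x => (hf x).1).
have [g0 [_ _ hu0]] := hu L (fun x => pi (iota x)) hd.
exists g; split => // y.
rewrite (hu0 _ (hom_comp hg lam_hom)); last by move=> x /=; rewrite hgi (hf x).2.
by rewrite (hu0 _ hpi).
Qed.

Lemma span_add1 (P : F -> Prop) r v : ls_span (fun z => P z \/ z = r) v ->
  exists s c, ls_span P s /\ v = s + c *: r.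
Proof.
move: v; apply: (span_ind (Q := fun v => exists s c, ls_span P s /\ v = s + c *: r)).
- by exists 0, 0; rewrite scale0r addr0; split => //; apply: span0.
- move=> a y z [s1 [c1 [h1 ->]]] [s2 [c2 [h2 ->]]].
  exists (a *: s1 + s2), (a * c1 + c2); split; first exact: span_lin.
  by rewrite scalerDr scalerA scalerDl addrACA.
- move=> z [hz | ->].
    by exists z, 0; rewrite scale0r addr0; split => //; apply: span_sub.
  by exists 0, 1; rewrite scale1r add0r; split => //; apply: span0.
Qed.

Definition G' (Hs : F -> Prop) (z : F) := Gen z \/ Hs z.

Lemma zorn_step x : ls_derived x -> ~ I x ->
  exists Hs : F -> Prop,
  [/\ forall h, Hs h -> R h /\ exists b, lsdeg F b h,
      ~ ls_span (G' Hs) x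
    & forall r, R r -> exists w s, ls_derived w /\ ls_span (G' Hs) s /\ r = w + s].
Proof.
move=> hx nIx.
pose Pz (Hs : set F) := (forall h, Hs h -> R h /\ exists b, lsdeg F b h) /\ ~ ls_span (G' Hs) x.
have [Hs [[P1 P2] Pmax]] : exists A, Pz A /\ forall B, proper A B -> ~ Pz B.
  apply: Zorn_bigcup => Fam FamP Ftot; split.
    by move=> h [Y FY Yh]; apply: (FamP Y FY).1.
  have key v : ls_span (G' (\bigcup_(Y in Fam) Y)%classic) v ->
      I v \/ exists Y, Fam Y /\ ls_span (G' Y) v.
    move: v; apply: (span_ind (Q := fun v => I v \/ exists Y, Fam Y /\ ls_span (G' Y) v)).
    - by left; apply: span0.
    - move=> a y z [hy | [Y [FY hy]]] [hz | [Z [FZ hz]]].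
      + by left; apply: span_lin.
      + right; exists Z; split => //; apply: span_lin => //.
        by apply: (span_mono _ hy) => w hw; left.
      + right; exists Y; split => //; apply: span_lin => //.
        by apply: (span_mono _ hz) => w hw; left.
      + have [YZ | ZY] := Ftot _ _ FY FZ.
          right; exists Z; split => //; apply: span_lin => //.
          by apply: (span_mono _ hy) => w [hw | hw]; [left | right; apply: YZ].
        right; exists Y; split => //; apply: span_lin => //.
        by apply: (span_mono _ hz) => w [hw | hw]; [left | right; apply: ZY].
    - move=> z [hz | [Y FY hz]].
        by left; apply: span_sub.
      by right; exists Y; split => //; apply: span_sub; right.
  move=> /key [// | [Y [FY hY]]].
  exact: (FamP Y FY).2.
exists Hs; split => //.
have homog r b : R r -> lsdeg F b r ->
    exists w s, ls_derived w /\ ls_span (G' Hs) s /\ r = w + s.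
  move=> hr hb.
  case: (pselect (Hs r)) => hHr.
    exists 0, r; split; first exact: span0.
    by split; [apply: span_sub; right | rewrite add0r].
  pose B z := Hs z \/ z = r.
  have nPB : ~ Pz B.
    apply: Pmax; split; first by move=> z hz; left.
    by move=> sub; apply: hHr; apply: (sub r); right.
  have hB : ls_span (G' B) x.
    apply: contrapT => nx; apply: nPB; split => //.
    by move=> h [/P1 // | ->]; split => //; exists b.
  have := span_add1 (P := G' Hs) (r := r) (v := x).
  case.
    apply: (span_mono _ hB) => z [hz | [hz | ->]]; [by left; left | by left; right | by right].
  move=> s [c [hs ex]].
  have c0 : c != 0.
    apply/eqP => c0; apply: P2; move: ex; rewrite c0 scale0r addr0 => ->; exact: hs.
  exists (c^-1 *: x), (- (c^-1 *: s)); split; first exact: spanZ.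
  split; first by apply: spanN; apply: spanZ.
  by rewrite -scalerBr ex addrC addKr scalerA mulVf // scale1r.
move=> r hr.
have [w0 [s0 [hw0 [hs0 e0]]]] := homog _ false (Rpr false hr) (pr_deg false r).
have [w1 [s1 [hw1 [hs1 e1]]]] := homog _ true (Rpr true hr) (pr_deg true r).
exists (w0 + w1), (s0 + s1); split; first exact: spanD.
split; first exact: spanD.
by rewrite {1}(pr_sum r) e0 e1 addrACA.
Qed.


Lemma quot_step (Hs : F -> Prop) (g : F -> T) :
  (forall h, Hs h -> R h /\ exists b, lsdeg F b h) ->
  (forall r, R r -> exists w s, ls_derived w /\ ls_span (G' Hs) s /\ r = w + s) ->
  ls_hom g -> (forall y, lam (g y) = pi y) ->
  forall x, ls_derived x -> g x = 0 -> ls_span (G' Hs) x.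
Proof.
move=> P1 hRS hg hgl x hx gx0.
have IS v : I v -> ls_span (G' Hs) v by apply: span_mono => w hw; left.
have hSR v : ls_span (G' Hs) v -> R v.
  move: v; apply: (span_ind (Q := R)); [exact: R0 | by move=> *; apply: Rlin |].
  by move=> z [[a [r [_ [hr ->]]]] | /P1 []//]; apply: Rbrl.
have hGr : forall b z, ls_span (G' Hs) z -> ls_span (G' Hs) (pr b z).
  move=> b z; move: z; apply: (span_ind (Q := fun z => ls_span (G' Hs) (pr b z))).
  - by rewrite (lin0 (@pr_lin K F b)); apply: span0.
  - by move=> a y z h1 h2; rewrite pr_lin; apply: span_lin.
  - move=> v [[a [r [_ [hr ->]]]] | hv].
      rewrite pr_br; apply: spanD; apply: IS; apply: I_gen; exact: Rpr.
    have [_ [c hc]] := P1 v hv; have [e1 e2] := pr_homog hc.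
    case: (eqVneq b c) => [-> | nbc]; first by rewrite e1; apply: span_sub; right.
    have -> : b = ~~ c by case: b c nbc hc e1 e2 => [] [].
    by rewrite e2; apply: span0.
have hIl : forall y z, ls_span (G' Hs) z -> ls_span (G' Hs) (lsbr F y z).
  by move=> y z /hSR hz; apply: IS; apply: I_gen.
have hIr : forall y z, ls_span (G' Hs) z -> ls_span (G' Hs) (lsbr F z y).
  by move=> y z /hSR hz; apply: IS; apply: I_genr.
pose Q := qL hGr hIl hIr.
pose mu (q : Q) : L := pi (rep q).
have mu_mk y : mu (mk (G' Hs) y) = pi y.
  have := hSR _ (rep_mk (G' Hs) y); rewrite /ls_ker (linB pil) => /eqP.
  by rewrite subr_eq0 => /eqP.
have brE y z : lsbr Q (mk (G' Hs) y) (mk (G' Hs) z) = mk (G' Hs) (lsbr F y z).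
  exact: (qbrE hIl hIr).
have hmu : in_C mu.
  split.
  - split.
    + move=> a q1 q2; have [u ->] := mk_surj q1; have [v ->] := mk_surj q2.
      by rewrite -mk_lin !mu_mk pil.
    + move=> b q [y [hy ->]]; rewrite mu_mk.
      by case: hpi => _ hd _; apply: hd.
    + move=> q1 q2; have [u ->] := mk_surj q1; have [v ->] := mk_surj q2.
      by rewrite brE !mu_mk; case: hpi => _ _ ->.
  - by move=> y; have [x0 e] := hpis y; exists (mk (G' Hs) x0); rewrite mu_mk.
  - move=> q; have [y ->] := mk_surj q; rewrite /ls_ker mu_mk => hy.
    split.
      have [w [s [hw [hs e]]]] := hRS y hy.
      have -> : mk (G' Hs) y = mk (G' Hs) w by apply/mk_eq; rewrite e addrC addKr.
      exact: (hom_derived (qL_mk_hom hGr hIl hIr) hw).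
    move=> q'; have [v ->] := mk_surj q'; rewrite brE; apply/mk_eq0.
    by apply: IS; apply: I_genr.
have [tau [htau htl]] := hT.2 Q mu hmu.
pose h y := tau (g y).
have hh : ls_hom h by apply: hom_comp.
have hmuh y : mu (h y) = pi y by rewrite /h htl hgl.
have hb a b : h (lsbr F a b) = mk (G' Hs) (lsbr F a b).
  have [_ _ ->] := hh.
  have [ua eua] := mk_surj (h a); have [ub eub] := mk_surj (h b).
  have ra : R (ua - a) by rewrite /ls_ker (linB pil) -mu_mk -eua hmuh subrr.
  have rb : R (ub - b) by rewrite /ls_ker (linB pil) -mu_mk -eub hmuh subrr.
  rewrite eua eub brE; apply/mk_eq.
  have -> : lsbr F ua ub - lsbr F a b = lsbr F (ua - a) ub + lsbr F a (ub - b).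
    by rewrite brBl brBr addrA subrK.
  by apply: spanD; apply: IS; [apply: I_genr | apply: I_gen].
have hxm : h x = mk (G' Hs) x.
  move: hx => [n [c [v [hv ->]]]].
  have [hl _ _] := hh.
  rewrite (linS hl) (linS (@mk_lin K F (G' Hs))); apply: eq_bigr => i _.
  by have [a [b [_ [_ ->]]]] := hv i; rewrite hb.
apply/mk_eq0; rewrite -hxm /h gx0.
by have [tl _ _] := htau; apply: (lin0 tl).
Qed.

End Main.

Unset Implicit Arguments.

Theorem corollary4p4 (K : fieldType)
  (hK2 : (2 \notin [pchar K])%N) (hK3 : (3 \notin [pchar K])%N)
  (L : lieSuper K) (hL : ls_findim L)
  (X : Type) (deg : X -> bool) (F : lieSuper K) (iota : X -> F)
  (hF : ls_free deg iota)
  (pi : F -> L) (hpi : ls_hom pi) (hpis : forall y : L, exists x, pi x = y)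
  (T : lieSuper K) (lam : T -> L) (hT : C_universal lam) :
  subquot_iso (ls_ker lam)
    (fun x : F => ls_derived x /\ ls_ker pi x)
    (ls_brk (@ls_all K F) (ls_ker pi)).
Proof.
have [g [hg hgl]] := exists_g hF hpi hT.
have [gl gd gb] := hg.
split.
  move=> x hI; split; last exact: (IR hpi hI).
  by apply: (span_mono _ hI) => z [a [b [_ [_ ->]]]]; exists a, b.
exists g; split; [split | ].
- by move=> a x y _ _; apply: gl.
- by move=> b x _; apply: gd.
- by move=> x y _ _; apply: gb.
- by move=> x [_ hx]; rewrite /ls_ker hgl.
- move=> z hz; have [[n [c [v [hv ez]]]] _] := lam_ker hT hz.
  pose pre (t : T) := proj1_sig (cid (hpis (lam t))).
  have preP t : pi (pre t) = lam t by rewrite /pre; case: (cid _).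
  have gpre t : g (pre t) = t + (g (pre t) - t) by rewrite addrC subrK.
  have kpre t : lam (g (pre t) - t) = 0.
    by have [ll _ _] := lam_hom hT; rewrite (linB ll) hgl preP subrr.
  have brpre a b : lsbr T a b = g (lsbr F (pre a) (pre b)).
    rewrite gb (gpre a) (gpre b) brDl !(brDr b (g (pre b) - b)) (lam_central_l hT _ (kpre a)).
    by rewrite (lam_central_l hT _ (kpre a)) (lam_central_r hT _ (kpre b)) !addr0.
  pose ab i := proj1_sig (cid (hv i)).
  pose bb i := proj1_sig (cid (proj2_sig (cid (hv i)))).
  have ev i : v i = lsbr T (ab i) (bb i).
    by rewrite /bb /ab; case: (cid (hv i)) => a /= h; case: (cid h) => b /= [_ [_ ->]].
  exists (\sum_(i < n) c i *: lsbr F (pre (ab i)) (pre (bb i))).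
  have ex : g (\sum_(i < n) c i *: lsbr F (pre (ab i)) (pre (bb i))) = z.
    rewrite (linS gl) ez; apply: eq_bigr => i _; by rewrite ev brpre.
  split => //; split.
    exists n, c, (fun i => lsbr F (pre (ab i)) (pre (bb i))); split => // i.
    by exists (pre (ab i)), (pre (bb i)).
  by rewrite /ls_ker -hgl ex.
- move=> x [hx hR]; split.
    move=> gx0; apply: contrapT => nI.
    have [Hs [P1 P2 P3]] := zorn_step hpi hx nI.
    by apply: P2; apply: (quot_step hpi hpis hT P1 P3 hg hgl hx gx0).
  move: x {hx hR}; apply: (span_ind (Q := fun v => g v = 0)).
  + exact: (lin0 gl).
  + by move=> a y z hy hz; rewrite gl hy hz scaler0 addr0.
  + move=> z [a [r [_ [hr ->]]]]; rewrite gb; apply: (lam_central_r hT).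
    by rewrite hgl.
Qed.
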